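(* Let $\phi:\mathrm{dom}(\phi)\to\mathbb{Z}^n$ be a virtual endomorphism of $\mathbb{Z}^n$ and let $A=\phi\otimes\mathbb{R}:\mathbb{R}^n\to\mathbb{R}^n$ be its unique $\mathbb{R}$-linear extension. Suppose the matrix of $A$ has nonnegative entries. Then the contraction coefficient $\rho(\phi)$ equals the Perron–Frobenius leading eigenvalue (spectral radius) $\lambda(A)$ of $A$.
   Context: A virtual endomorphism of a group $G$ is a homomorphism $\phi:\mathrm{dom}(\phi)\to G$ defined on a finite-index subgroup $\mathrm{dom}(\phi)$. For finitely generated $G$ with word length $|\cdot|$ relative to a finite symmetric generating set, the contraction coefficient is $\rho(\phi)=\limsup_{m\to\infty}\big(\limsup_{g\in\mathrm{dom}(\phi^{\circ m}),|g|\to\infty}|\phi^{\circ m}(g)|/|g|\big)^{1/m}$, where $\phi^{\circ m}$ is the $m$-fold composite on its natural domain; it does not depend on the generating set. *)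

(* Defs.v *)
From Stdlib Require Import Reals ZArith List.
Open Scope R_scope.

(** Elements of Z^n: functions nat -> Z vanishing at indices >= n. *)
Definition vecZ := nat -> Z.
Definition inZn (n : nat) (v : vecZ) : Prop := forall i, (n <= i)%nat -> v i = 0%Z.
Definition vadd (u v : vecZ) : vecZ := fun i => (u i + v i)%Z.
Definition vopp (u : vecZ) : vecZ := fun i => (- u i)%Z.

Record finite_index_subgroup (n : nat) (D : vecZ -> Prop) : Prop := {
  fis_sub  : forall g, D g -> inZn n g;
  fis_zero : D (fun _ => 0%Z);
  fis_add  : forall g h, D g -> D h -> D (vadd g h);
  fis_opp  : forall g, D g -> D (vopp g);
  fis_index : exists reps : list vecZ,
      forall g, inZn n g -> exists r, In r reps /\ D (vadd g (vopp r))
}.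

(** Virtual endomorphism of Z^n: a homomorphism phi : D -> Z^n, D of finite index
    (values of phi outside D are irrelevant). *)
Record virtual_endo (n : nat) (D : vecZ -> Prop) (phi : vecZ -> vecZ) : Prop := {
  ve_dom : finite_index_subgroup n D;
  ve_into : forall g, D g -> inZn n (phi g);
  ve_hom : forall g h, D g -> D h -> forall i, phi (vadd g h) i = (phi g i + phi h i)%Z
}.

(** Natural domain of the m-fold composite phi^m = Nat.iter m phi. *)
Fixpoint dom_iter (n : nat) (D : vecZ -> Prop) (phi : vecZ -> vecZ) (m : nat) (g : vecZ)
  : Prop :=
  match m with
  | O => inZn n g
  | S m' => dom_iter n D phi m' g /\ D (Nat.iter m' phi g)
  end.

Definition is_word (S : list vecZ) (k : nat) (g : vecZ) : Prop :=
  exists l : list vecZ, length l = k /\ (forall s, In s l -> In s S) /\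
    forall i, g i = fold_right (fun s acc => (s i + acc)%Z) 0%Z l.

Definition sym_gen_set (n : nat) (S : list vecZ) : Prop :=
  (forall s, In s S -> inZn n s) /\
  (forall s, In s S -> exists s', In s' S /\ forall i, s' i = (- s i)%Z) /\
  (forall g, inZn n g -> exists k, is_word S k g).

Definition word_length (S : list vecZ) (g : vecZ) (k : nat) : Prop :=
  is_word S k g /\ forall k', is_word S k' g -> (k <= k')%nat.

(** L = limsup_{g in dom(phi^m), |g| -> oo} |phi^m g| / |g|  (L a real number). *)
Definition inner_limsup (n : nat) (S : list vecZ) (D : vecZ -> Prop) (phi : vecZ -> vecZ)
  (m : nat) (L : R) : Prop :=
  forall eps, 0 < eps ->
    (exists R0, forall g k kg, dom_iter n D phi m g -> word_length S g k ->
        word_length S (Nat.iter m phi g) kg -> R0 <= INR k ->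
        INR kg / INR k <= L + eps) /\
    (forall R0, exists g k kg, dom_iter n D phi m g /\ word_length S g k /\
        word_length S (Nat.iter m phi g) kg /\ R0 <= INR k /\
        L - eps <= INR kg / INR k).

Definition limsup_seq (u : nat -> R) (r : R) : Prop :=
  forall eps, 0 < eps ->
    (exists N, forall m, (N <= m)%nat -> u m <= r + eps) /\
    (forall N, exists m, (N <= m)%nat /\ r - eps <= u m).

(** nonnegative m-th root (x^(1/m) for x > 0, and 0 for x <= 0). *)
Definition rootn (m : nat) (x : R) : R :=
  if Rle_dec x 0 then 0 else Rpower x (/ INR m).

Definition contraction_coefficient (n : nat) (S : list vecZ) (D : vecZ -> Prop)
  (phi : vecZ -> vecZ) (r : R) : Prop :=
  exists L : nat -> R,
    (forall m, (1 <= m)%nat -> inner_limsup n S D phi m (L m)) /\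
    limsup_seq (fun m => rootn m (L m)) r.

(** Real n x n matrices as nat -> nat -> R (entries at indices < n). *)
Fixpoint sumR (n : nat) (f : nat -> R) : R :=
  match n with O => 0 | S k => sumR k f + f k end.

Definition Cmul (a b : R * R) : R * R :=
  (fst a * fst b - snd a * snd b, fst a * snd b + snd a * fst b).
Definition Cmod (a : R * R) : R := sqrt (fst a * fst a + snd a * snd a).

Definition is_eigenvalue (n : nat) (A : nat -> nat -> R) (lam : R * R) : Prop :=
  exists v : nat -> R * R,
    (exists i, (i < n)%nat /\ v i <> (0, 0)) /\
    forall i, (i < n)%nat ->
      (sumR n (fun j => A i j * fst (v j)), sumR n (fun j => A i j * snd (v j)))
      = Cmul lam (v i).

Definition is_spectral_radius (n : nat) (A : nat -> nat -> R) (r : R) : Prop :=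
  (exists lam, is_eigenvalue n A lam /\ Cmod lam = r) /\
  (forall lam, is_eigenvalue n A lam -> Cmod lam <= r).

Definition linear_extension (n : nat) (D : vecZ -> Prop) (phi : vecZ -> vecZ)
  (A : nat -> nat -> R) : Prop :=
  forall g, D g -> forall i, (i < n)%nat ->
    IZR (phi g i) = sumR n (fun j => A i j * IZR (g j)).

(* Main.v *)
Require Import Defs.
From Stdlib Require Import Reals ZArith List Lra Lia Psatz Classical FunctionalExtensionality IndefiniteDescription.
Open Scope R_scope.

Lemma sumR_ext d f g : (forall k, (k < d)%nat -> f k = g k) -> sumR d f = sumR d g.
Proof. induction d; simpl; intros; auto. rewrite IHd by (intros; apply H; lia). rewrite H by lia; auto. Qed.

Lemma sumR_le d f g : (forall k, (k < d)%nat -> f k <= g k) -> sumR d f <= sumR d g.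
Proof. induction d; simpl; intros; [lra|]. assert (f d <= g d) by (apply H; lia).
 assert (sumR d f <= sumR d g) by (apply IHd; intros; apply H; lia). lra. Qed.

Lemma sumR_nonneg d f : (forall k, (k < d)%nat -> 0 <= f k) -> 0 <= sumR d f.
Proof. intros. replace 0 with (sumR d (fun _ => 0)). apply sumR_le; auto.
 induction d; simpl; auto. rewrite IHd; [lra|]. intros; apply H; lia. Qed.

Lemma sumR_zero d : sumR d (fun _ => 0) = 0.
Proof. induction d; simpl; auto. rewrite IHd; lra. Qed.

Lemma sumR_plus d f g : sumR d (fun k => f k + g k) = sumR d f + sumR d g.
Proof. induction d; simpl; auto. lra. rewrite IHd. lra. Qed.

Lemma sumR_minus d f g : sumR d (fun k => f k - g k) = sumR d f - sumR d g.
Proof. induction d; simpl; auto. lra. rewrite IHd. lra. Qed.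

Lemma sumR_scal d c f : sumR d (fun k => c * f k) = c * sumR d f.
Proof. induction d; simpl; auto. lra. rewrite IHd. lra. Qed.

Lemma sumR_scal_r d c f : sumR d (fun k => f k * c) = sumR d f * c.
Proof. induction d; simpl; auto. lra. rewrite IHd. lra. Qed.

Lemma sumR_swap d e f : sumR d (fun i => sumR e (fun j => f i j)) = sumR e (fun j => sumR d (fun i => f i j)).
Proof. induction d; simpl. rewrite sumR_zero; auto. rewrite IHd. rewrite <- sumR_plus. auto. Qed.

Lemma sumR_abs d f : Rabs (sumR d f) <= sumR d (fun k => Rabs (f k)).
Proof. induction d; simpl. rewrite Rabs_R0; lra. eapply Rle_trans. apply Rabs_triang. lra. Qed.

Lemma sumR_term d f k : (forall j, (j < d)%nat -> 0 <= f j) -> (k < d)%nat -> f k <= sumR d f.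
Proof. induction d; intros. lia. simpl. destruct (Nat.eq_dec k d). subst.
 assert (0 <= sumR d f) by (apply sumR_nonneg; intros; apply H; lia). lra.
 assert (f k <= sumR d f) by (apply IHd; [intros; apply H|]; lia). assert (0 <= f d) by (apply H; lia). lra. Qed.

Definition delta (i j : nat) : R := if Nat.eqb i j then 1 else 0.

Lemma sumR_delta_r d f k : (k < d)%nat -> sumR d (fun j => f j * delta j k) = f k.
Proof. induction d; intros. lia. simpl. unfold delta at 2. destruct (Nat.eqb_spec d k).
 subst. rewrite (sumR_ext _ _ (fun _ => 0)). rewrite sumR_zero; lra.
 intros. unfold delta. destruct (Nat.eqb_spec k0 k); [lia|lra].
 rewrite IHd by lia. lra. Qed.

Lemma sumR_delta_l d f k : (k < d)%nat -> sumR d (fun j => delta k j * f j) = f k.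
Proof. intros. rewrite <- (sumR_delta_r d f k H). apply sumR_ext. intros. unfold delta.
 destruct (Nat.eqb_spec k k0), (Nat.eqb_spec k0 k); try lia; lra. Qed.

Lemma sumR_le_const d f c : (forall k, (k < d)%nat -> f k <= c) -> sumR d f <= INR d * c.
Proof. induction d; intros. simpl; lra. simpl sumR. rewrite S_INR. assert (f d <= c) by (apply H; lia).
 assert (sumR d f <= INR d * c) by (apply IHd; intros; apply H; lia). lra. Qed.

Lemma sumR_prod_le d x y : (forall k, (k < d)%nat -> 0 <= x k) -> (forall k, (k < d)%nat -> 0 <= y k) ->
  sumR d (fun k => x k * y k) <= sumR d x * sumR d y.
Proof. intros. rewrite <- sumR_scal_r. apply sumR_le. intros. apply Rmult_le_compat_l. auto. apply sumR_term; auto. Qed.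

Fixpoint Apow (n : nat) (A : nat -> nat -> R) (m : nat) (i j : nat) : R :=
  match m with O => delta i j | S m' => sumR n (fun k => A i k * Apow n A m' k j) end.

Section Mat.
Variable n : nat.
Variable A : nat -> nat -> R.
Hypothesis Anonneg : forall i j, (i < n)%nat -> (j < n)%nat -> 0 <= A i j.

Lemma Apow_nonneg m i j : (i < n)%nat -> (j < n)%nat -> 0 <= Apow n A m i j.
Proof. revert i j; induction m; intros; simpl. unfold delta; destruct (Nat.eqb i j); lra.
 apply sumR_nonneg; intros. apply Rmult_le_pos; auto. Qed.

Lemma Apow_add a c i j : (i < n)%nat -> (j < n)%nat ->
  Apow n A (a + c) i j = sumR n (fun k => Apow n A a i k * Apow n A c k j).
Proof. revert i j; induction a; intros; simpl.
 rewrite sumR_delta_l; auto.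
 rewrite (sumR_ext _ _ (fun l => A i l * sumR n (fun k => Apow n A a l k * Apow n A c k j))) by (intros; rewrite IHa; auto).
 rewrite (sumR_ext _ (fun l => _ * _) (fun l => sumR n (fun k => A i l * (Apow n A a l k * Apow n A c k j)))) by (intros; rewrite sumR_scal; auto).
 rewrite sumR_swap. apply sumR_ext; intros. rewrite <- sumR_scal_r. apply sumR_ext; intros. ring. Qed.

Definition bm (m : nat) : R := sumR n (fun i => sumR n (fun j => Apow n A m i j)).
Definition row (m i : nat) : R := sumR n (fun j => Apow n A m i j).

Lemma bm_nonneg m : 0 <= bm m.
Proof. apply sumR_nonneg; intros; apply sumR_nonneg; intros; apply Apow_nonneg; auto. Qed.

Lemma row_nonneg m i : (i < n)%nat -> 0 <= row m i.
Proof. intros; apply sumR_nonneg; intros; apply Apow_nonneg; auto. Qed.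

Lemma row_le_bm m i : (i < n)%nat -> row m i <= bm m.
Proof. intros. unfold bm. apply (sumR_term n (row m)); auto. intros; apply row_nonneg; auto. Qed.

Lemma entry_le_bm m i j : (i < n)%nat -> (j < n)%nat -> Apow n A m i j <= bm m.
Proof. intros. eapply Rle_trans; [|apply (row_le_bm m i); auto]. unfold row.
 apply (sumR_term n (fun j => Apow n A m i j)); auto. intros; apply Apow_nonneg; auto. Qed.

Lemma bm_submult a c : bm (a + c) <= bm a * bm c.
Proof. unfold bm.
 rewrite (sumR_ext _ _ (fun i => sumR n (fun j => sumR n (fun k => Apow n A a i k * Apow n A c k j)))).
 2:{ intros; apply sumR_ext; intros; apply Apow_add; auto. }
 rewrite <- sumR_scal_r. apply sumR_le; intros i Hi.
 rewrite sumR_swap. rewrite (sumR_ext _ (fun k => sumR n _) (fun k => Apow n A a i k * sumR n (fun j => Apow n A c k j))).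
 2:{ intros; rewrite sumR_scal; auto. }
 rewrite <- sumR_scal_r. apply sumR_le; intros. apply Rmult_le_compat_l. apply Apow_nonneg; auto.
 apply (row_le_bm c k); auto.
Qed.

Lemma bm_0 : bm 0 = INR n.
Proof. unfold bm. simpl. rewrite (sumR_ext _ _ (fun _ => 1)).
 clear Anonneg. induction n; [simpl; auto|]. simpl sumR. rewrite S_INR. lra.
 intros. rewrite (sumR_ext _ _ (fun j => 1 * delta j k)). apply sumR_delta_r; auto.
 intros. unfold delta. destruct (Nat.eqb_spec k k0), (Nat.eqb_spec k0 k); try lia; lra. Qed.

Lemma row_S m i : (i < n)%nat -> row (S m) i = sumR n (fun k => A i k * row m k).
Proof. intros. unfold row. simpl. rewrite sumR_swap. apply sumR_ext; intros. rewrite sumR_scal. auto. Qed.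

Lemma bm_pow k j : bm (S j * k) <= bm k ^ S j.
Proof. induction j. simpl. rewrite Nat.add_0_r. lra.
 replace (S (S j) * k)%nat with (k + S j * k)%nat by lia.
 eapply Rle_trans. apply bm_submult. change (bm k ^ S (S j)) with (bm k * bm k ^ S j).
 apply Rmult_le_compat_l. apply bm_nonneg. auto. Qed.
End Mat.

Lemma INR_pos m : (1 <= m)%nat -> 0 < INR m.
Proof. intros. apply lt_0_INR. lia. Qed.

Lemma rootn_nonneg m x : 0 <= rootn m x.
Proof. unfold rootn. destruct (Rle_dec x 0). lra. unfold Rpower. left; apply exp_pos. Qed.

Lemma Rpower_pos x y : 0 < Rpower x y.
Proof. unfold Rpower; apply exp_pos. Qed.

Lemma rootn_pow m t : (1 <= m)%nat -> 0 < t -> Rpower (t ^ m) (/ INR m) = t.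
Proof. intros. rewrite <- Rpower_pow by auto. rewrite Rpower_mult. rewrite Rinv_r. apply Rpower_1; auto.
 apply not_0_INR; lia. Qed.

Lemma rootn_mono m x y : (1 <= m)%nat -> 0 <= x <= y -> rootn m x <= rootn m y.
Proof. intros. unfold rootn. destruct (Rle_dec x 0); destruct (Rle_dec y 0); try lra.
 left; apply Rpower_pos. apply Rle_Rpower_l. left; apply Rinv_0_lt_compat. apply INR_pos; auto. lra. Qed.

Lemma rootn_pos_eq m x : 0 < x -> rootn m x = Rpower x (/ INR m).
Proof. intros. unfold rootn. destruct (Rle_dec x 0); lra. Qed.

Lemma rootn_le_of m x t : (1 <= m)%nat -> 0 < t -> x <= t ^ m -> rootn m x <= t.
Proof. intros. unfold rootn. destruct (Rle_dec x 0). lra. rewrite <- (rootn_pow m t) by auto.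
 apply Rle_Rpower_l. left; apply Rinv_0_lt_compat. apply INR_pos; auto. lra. Qed.

Lemma rootn_lt_inv m x t : (1 <= m)%nat -> 0 <= x -> 0 < t -> rootn m x < t -> x < t ^ m.
Proof. intros. destruct (Rle_lt_dec (t ^ m) x); auto. exfalso.
 assert (t <= rootn m x). { rewrite <- (rootn_pow m t) by auto. rewrite rootn_pos_eq.
  apply Rle_Rpower_l. left; apply Rinv_0_lt_compat. apply INR_pos; auto. split; auto. apply pow_lt; auto.
  assert (0 < t^m) by (apply pow_lt; auto). lra. } lra. Qed.

Lemma le_rootn m x t : (1 <= m)%nat -> 0 <= t -> t ^ m <= x -> t <= rootn m x.
Proof. intros. destruct H0. rewrite <- (rootn_pow m t) by auto. assert (0 < t^m) by (apply pow_lt; auto).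
 rewrite rootn_pos_eq by lra. apply Rle_Rpower_l. left; apply Rinv_0_lt_compat. apply INR_pos; auto. lra.
 subst. apply rootn_nonneg. Qed.

Lemma rootn_mul m a x : (1 <= m)%nat -> 0 < a -> 0 <= x -> rootn m (a * x) = Rpower a (/ INR m) * rootn m x.
Proof. intros. destruct H1. rewrite !rootn_pos_eq; auto. rewrite Rpower_mult_distr; auto.
 apply Rmult_lt_0_compat; auto. subst. rewrite Rmult_0_r. unfold rootn. destruct (Rle_dec 0 0); lra. Qed.

Lemma rootn_bound m x K t : (1 <= m)%nat -> 0 < K -> 0 < t -> 0 <= x -> x <= K * t ^ m ->
  rootn m x <= Rpower K (/ INR m) * t.
Proof. intros. eapply Rle_trans. apply (rootn_mono m x (K * t^m)); auto.
 rewrite rootn_mul; auto. rewrite rootn_pos_eq. rewrite rootn_pow; auto. lra. apply pow_lt; auto.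
 left; apply pow_lt; auto. Qed.

Lemma Rpower_lim K : 0 < K -> forall d, 0 < d -> exists N, forall m, (N <= m)%nat ->
  1 - d <= Rpower K (/ INR m) <= 1 + d.
Proof. intros. set (c := Rabs (ln K)).
 assert (Hc : 0 <= c) by apply Rabs_pos.
 destruct (archimed ((c + 1) * (1 + d) / d)) as [Ha _].
 destruct (INR_unbounded (Rmax 1 (IZR (up ((c + 1) * (1 + d) / d))))) as [N HN].
 exists N. intros m Hm. assert (HmN : INR N <= INR m) by (apply le_INR; auto).
 assert (Hm1 : 1 < INR m) by (pose proof (Rmax_l 1 (IZR (up ((c + 1) * (1 + d) / d)))); lra).
 assert (Hmb : (c + 1) * (1 + d) / d < INR m) by (pose proof (Rmax_r 1 (IZR (up ((c + 1) * (1 + d) / d)))); lra).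
 assert (Hm0 : 0 < INR m) by lra.
 set (y := / INR m * ln K).
 assert (Hy : Rabs y <= c / INR m). { unfold y. rewrite Rabs_mult. rewrite Rabs_inv. rewrite (Rabs_right (INR m)) by lra.
   unfold c. unfold Rdiv. lra. }
 assert (Hcm : c / INR m < d / (1 + d)). { apply (Rmult_lt_reg_r (INR m)); auto. unfold Rdiv.
   rewrite Rmult_assoc, Rinv_l by lra. apply (Rmult_lt_reg_r ((1 + d) / d)). apply Rdiv_lt_0_compat; lra.
   replace (d * / (1 + d) * INR m * ((1 + d) / d)) with (INR m) by (field; lra).
   replace (c * 1 * ((1 + d) / d)) with (c * (1 + d) / d) by (field; lra).
   assert (c * (1 + d) / d <= (c + 1) * (1 + d) / d). { unfold Rdiv. apply Rmult_le_compat_r. left; apply Rinv_0_lt_compat; lra.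
     nra. } lra. }
 assert (Hdd : d / (1 + d) <= d). { unfold Rdiv. apply (Rmult_le_reg_r (1 + d)). lra. rewrite Rmult_assoc, Rinv_l by lra. nra. }
 assert (Hyb : Rabs y < d / (1 + d)) by lra.
 unfold Rpower. fold y. split.
 - pose proof (exp_ineq1_le y). apply Rabs_def2 in Hyb. lra.
 - pose proof (exp_ineq1_le (- y)). rewrite exp_Ropp in H1. apply Rabs_def2 in Hyb.
   assert (0 < 1 - y) by (assert (d / (1+d) < 1) by (apply (Rmult_lt_reg_r (1+d)); [lra|]; unfold Rdiv; rewrite Rmult_assoc, Rinv_l by lra; lra); lra).
   assert (exp y <= / (1 - y)). { rewrite <- (Rinv_inv (exp y)). apply Rinv_le_contravar; auto. }
   assert (/ (1 - y) <= 1 + d). { assert (1 - y >= 1 - d / (1 + d)) by lra.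
     replace (1 - d / (1 + d)) with (/ (1 + d)) in H4 by (field; lra).
     rewrite <- (Rinv_inv (1 + d)). apply Rinv_le_contravar. apply Rinv_0_lt_compat; lra. lra. }
   lra.
Qed.

Section Spec.
Variable n : nat.
Variable A : nat -> nat -> R.
Hypothesis Anonneg : forall i j, (i < n)%nat -> (j < n)%nat -> 0 <= A i j.

Definition Eneg (x : R) : Prop := exists m, (1 <= m)%nat /\ - x = rootn m (bm n A m).

Lemma Eneg_bound : bound Eneg.
Proof. exists 0. intros x [m [_ H]]. pose proof (rootn_nonneg m (bm n A m)). lra. Qed.

Lemma Eneg_ne : exists x, Eneg x.
Proof. exists (- rootn 1 (bm n A 1)). exists 1%nat. split; auto. lra. Qed.

Definition rlub := proj1_sig (completeness Eneg Eneg_bound Eneg_ne).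
Definition rr := - rlub.
Lemma rlub_spec : is_lub Eneg rlub.
Proof. exact (proj2_sig (completeness Eneg Eneg_bound Eneg_ne)). Qed.

Lemma rr_lb m : (1 <= m)%nat -> rr <= rootn m (bm n A m).
Proof. intros. unfold rr. destruct rlub_spec as [Hl _]. set (l := rlub) in *.
 assert (Eneg (- rootn m (bm n A m))) by (exists m; split; auto; lra). apply Hl in H0. lra. Qed.

Lemma rr_nonneg : 0 <= rr.
Proof. unfold rr. destruct rlub_spec as [_ Hl]. set (l := rlub) in *.
 assert (l <= 0). apply Hl. intros x [m [_ H]]. pose proof (rootn_nonneg m (bm n A m)). lra. lra. Qed.

Lemma rr_glb t : rr < t -> exists k, (1 <= k)%nat /\ rootn k (bm n A k) < t.
Proof. intros. apply NNPP; intro Hn.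
 unfold rr in H. destruct rlub_spec as [_ Hl]. set (l := rlub) in *.
 assert (l <= - t). apply Hl. intros x [m [Hm Hx]]. destruct (Rlt_le_dec (rootn m (bm n A m)) t).
 exfalso; apply Hn; exists m; auto. lra. lra. Qed.

Lemma bm_growth t : rr < t -> exists K, 0 < K /\ forall m, bm n A m <= K * t ^ m.
Proof. intros. destruct (rr_glb t H) as [k [Hk Hlt]].
 assert (Ht : 0 < t) by (pose proof rr_nonneg; lra).
 assert (Hbk : bm n A k < t ^ k) by (apply rootn_lt_inv; auto; apply bm_nonneg; auto).
 set (B := sumR k (fun s => bm n A s / t ^ s)).
 assert (HB : forall s, (s < k)%nat -> bm n A s <= B * t ^ s).
 { intros. assert (bm n A s / t ^ s <= B). { apply (sumR_term k (fun s => bm n A s / t ^ s)); auto.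
     intros. unfold Rdiv. apply Rmult_le_pos. apply bm_nonneg; auto. left; apply Rinv_0_lt_compat, pow_lt; auto. }
   assert (0 < t ^ s) by (apply pow_lt; auto).
   replace (bm n A s) with (bm n A s / t ^ s * t ^ s) by (field; lra). apply Rmult_le_compat_r; lra. }
 assert (HB0 : 0 <= B). { apply sumR_nonneg. intros. unfold Rdiv. apply Rmult_le_pos. apply bm_nonneg; auto. left; apply Rinv_0_lt_compat, pow_lt; auto. }
 exists (B + 1). split. lra. intros m.
 assert (Htm : 0 < t ^ m) by (apply pow_lt; auto).
 destruct (Nat.lt_ge_cases m k). pose proof (HB m H0). nra.
 assert (Hm : m = ((m / k) * k + m mod k)%nat) by (pose proof (Nat.div_mod m k); lia).
 assert (Hq : (1 <= m / k)%nat) by (apply Nat.div_le_lower_bound; lia).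
 assert (Hs : (m mod k < k)%nat) by (apply Nat.mod_upper_bound; lia).
 destruct (m / k)%nat as [|q] eqn:Eq. lia. rewrite Hm.
 eapply Rle_trans. apply bm_submult; auto.
 assert (Hbs := HB _ Hs).
 assert (bm n A (S q * k) <= (t ^ k) ^ S q). { eapply Rle_trans. apply bm_pow; auto. apply pow_incr. split; [apply bm_nonneg; auto| lra]. }
 rewrite pow_add. rewrite Nat.mul_comm, pow_mult.
 assert (0 <= bm n A (S q * k)) by (apply bm_nonneg; auto). assert (0 <= bm n A (m mod k)) by (apply bm_nonneg; auto).
 assert (0 < t ^ (k * S q)) by (apply pow_lt; auto). assert (0 < t ^ (m mod k)) by (apply pow_lt; auto).

 apply Rle_trans with ((t ^ k) ^ S q * (B * t ^ (m mod k))). apply Rmult_le_compat; auto; try (rewrite Nat.mul_comm; auto; fail). assert (0 < (t^k)^S q) by (apply pow_lt, pow_lt; auto). nra.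
Qed.

Lemma rootn_limsup (L : nat -> R) c C : 0 < c -> 0 < C ->
  (forall m, (1 <= m)%nat -> c * bm n A m <= L m <= C * bm n A m) ->
  limsup_seq (fun m => rootn m (L m)) rr.
Proof. intros Hc HC HL eps He. pose proof rr_nonneg as Hr0. split.
 - set (t := rr + eps / 2). assert (Ht : rr < t) by (unfold t; lra).
   destruct (bm_growth t Ht) as [K [HK HbK]].
   assert (Ht0 : 0 < t) by lra.
   destruct (Rpower_lim (C * K) ltac:(nra) (eps / (2 * t))) as [N HN].
   apply Rdiv_lt_0_compat; lra.
   exists (Nat.max N 1). intros m Hm.
   assert (Hm1 : (1 <= m)%nat) by lia.
   destruct (HL m Hm1) as [HL1 HL2].
   assert (0 <= bm n A m) by (apply bm_nonneg; auto).
   eapply Rle_trans. apply (rootn_bound m (L m) (C * K) t); auto. nra. nra.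
   pose proof (HbK m). nra.
   destruct (HN m ltac:(lia)) as [_ Hup].
   assert (Rpower (C * K) (/ INR m) * t <= (1 + eps / (2 * t)) * t) by (apply Rmult_le_compat_r; lra).
   replace ((1 + eps / (2 * t)) * t) with (t + eps / 2) in H0 by (field; lra). unfold t in *; lra.
 - intros N. set (d := eps / (rr + 1)).
   assert (Hd : 0 < d) by (apply Rdiv_lt_0_compat; lra).
   assert (Hdr : d * rr <= eps). { unfold d, Rdiv. apply Rle_trans with (eps * / (rr+1) * (rr+1)).
     apply Rmult_le_compat_l. left; apply Rmult_lt_0_compat; [lra| apply Rinv_0_lt_compat; lra]. lra.
     rewrite Rmult_assoc, Rinv_l; lra. }
   destruct (Rpower_lim c Hc d Hd) as [N0 HN0].
   exists (Nat.max N (Nat.max N0 1)). split. lia.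
   set (m := Nat.max N (Nat.max N0 1)).
   assert (Hm1 : (1 <= m)%nat) by lia.
   destruct (HL m Hm1) as [HL1 HL2].
   assert (0 <= bm n A m) by (apply bm_nonneg; auto).
   assert (rootn m (c * bm n A m) <= rootn m (L m)) by (apply rootn_mono; auto; nra).
   rewrite rootn_mul in H0 by auto.
   pose proof (rr_lb m Hm1). destruct (HN0 m ltac:(lia)) as [Hlo _].
   pose proof (Rpower_pos c (/ INR m)).
   assert (rr - eps <= Rpower c (/ INR m) * rootn m (bm n A m)) by nra. lra.
Qed.
End Spec.

Lemma Cmod_nonneg a : 0 <= Cmod a.
Proof. unfold Cmod; apply sqrt_pos. Qed.

Lemma Cmod_mul a b : Cmod (Cmul a b) = Cmod a * Cmod b.
Proof. destruct a as [a1 a2], b as [b1 b2]; unfold Cmod, Cmul; simpl.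
 rewrite <- sqrt_mult by nra. f_equal. ring. Qed.

Lemma sqrt_le_of x y : 0 <= y -> x <= y * y -> sqrt x <= y.
Proof. intros. rewrite <- (sqrt_square y) by auto. apply sqrt_le_1_alt. auto. Qed.

Lemma Cmod_triang x1 x2 y1 y2 : Cmod (x1 + y1, x2 + y2) <= Cmod (x1, x2) + Cmod (y1, y2).
Proof. unfold Cmod; simpl. apply sqrt_le_of. pose proof (sqrt_pos (x1*x1+x2*x2)); pose proof (sqrt_pos (y1*y1+y2*y2)); lra.
 pose proof (sqrt_sqrt (x1*x1+x2*x2) ltac:(nra)). pose proof (sqrt_sqrt (y1*y1+y2*y2) ltac:(nra)).
 set (a := sqrt (x1*x1+x2*x2)) in *. set (b := sqrt (y1*y1+y2*y2)) in *.
 assert (x1*y1 + x2*y2 <= a * b). { destruct (Rle_lt_dec (x1*y1+x2*y2) 0).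
   assert (0 <= a*b) by (apply Rmult_le_pos; apply sqrt_pos). lra.
   unfold a, b. rewrite <- sqrt_mult by nra. apply Rsqr_incr_0_var. rewrite Rsqr_sqrt by nra. unfold Rsqr. pose proof (pow2_ge_0 (x1*y2-x2*y1)). nra. apply sqrt_pos. }
 nra. Qed.

Lemma Cmod_scal c x y : 0 <= c -> Cmod (c * x, c * y) = c * Cmod (x, y).
Proof. intros. unfold Cmod; simpl. replace (c*x*(c*x)+c*y*(c*y)) with ((c*c)*(x*x+y*y)) by ring.
 rewrite sqrt_mult by nra. rewrite sqrt_square; auto. Qed.

Lemma Cmod_sum d f g : Cmod (sumR d f, sumR d g) <= sumR d (fun j => Cmod (f j, g j)).
Proof. induction d; simpl. unfold Cmod; simpl. rewrite Rmult_0_l, Rplus_0_l, sqrt_0. lra.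
 eapply Rle_trans. apply Cmod_triang. lra. Qed.

Lemma Cmod_pos a : a <> (0, 0) -> 0 < Cmod a.
Proof. destruct a as [x y]. intros. unfold Cmod; simpl. apply sqrt_lt_R0.
 destruct (Req_dec x 0); destruct (Req_dec y 0); subst; try (exfalso; auto; fail); nra. Qed.

Section Eig.
Variable n : nat.
Variable A : nat -> nat -> R.
Hypothesis Anonneg : forall i j, (i < n)%nat -> (j < n)%nat -> 0 <= A i j.

Lemma eig_bound lam : is_eigenvalue n A lam -> Cmod lam <= rr n A.
Proof. intros [v [[i0 [Hi0 Hv0]] Hv]].
 set (w := fun j => Cmod (v j)).
 assert (Hw0 : forall j, 0 <= w j) by (intros; apply Cmod_nonneg).
 assert (H1 : forall i, (i < n)%nat -> Cmod lam * w i <= sumR n (fun j => A i j * w j)).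
 { intros. unfold w. rewrite <- Cmod_mul. rewrite <- (Hv i H). eapply Rle_trans. apply Cmod_sum.
   apply sumR_le; intros. rewrite Cmod_scal by (apply Anonneg; auto). destruct (v k); simpl; lra. }
 assert (H2 : forall m i, (i < n)%nat -> Cmod lam ^ m * w i <= sumR n (fun j => Apow n A m i j * w j)).
 { induction m; intros. simpl. rewrite sumR_delta_l; auto. lra.
   simpl Apow. rewrite (sumR_ext _ (fun j => sumR n _ * w j) (fun j => sumR n (fun k => A i k * Apow n A m k j * w j))).
   2:{ intros; rewrite <- sumR_scal_r; auto. }
   rewrite sumR_swap. eapply Rle_trans with (Cmod lam ^ m * sumR n (fun j => A i j * w j)).
   simpl. replace (Cmod lam * Cmod lam ^ m * w i) with (Cmod lam ^ m * (Cmod lam * w i)) by ring. apply Rmult_le_compat_l. apply pow_le, Cmod_nonneg. apply H1; auto.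
   rewrite <- sumR_scal. apply sumR_le; intros. rewrite (sumR_ext _ _ (fun j => A i k * (Apow n A m k j * w j))) by (intros; ring).
   rewrite sumR_scal. rewrite <- Rmult_assoc, (Rmult_comm _ (A i k)), Rmult_assoc. apply Rmult_le_compat_l. apply Anonneg; auto. apply IHm; auto. }
 set (W := sumR n w).
 assert (HW : 0 < W). { unfold W. apply Rlt_le_trans with (w i0). apply Cmod_pos; auto. apply sumR_term; auto. }
 assert (H3 : forall m, Cmod lam ^ m <= bm n A m).
 { intros. apply (Rmult_le_reg_r W); auto. unfold W at 1. rewrite <- sumR_scal.
   eapply Rle_trans. apply sumR_le. intros. apply H2; auto. unfold bm. rewrite <- sumR_scal_r. apply sumR_le; intros.
   rewrite <- sumR_scal_r. apply sumR_le; intros. apply Rmult_le_compat_l. apply Apow_nonneg; auto. apply sumR_term; auto. }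
 destruct (Rle_lt_dec (Cmod lam) (rr n A)); auto.
 destruct (rr_glb n A (Cmod lam) r) as [k [Hk Hlt]].
 assert (Cmod lam <= rootn k (bm n A k)) by (apply le_rootn; auto; apply Cmod_nonneg). lra.
Qed.
End Eig.

Definition sincr (f : nat -> nat) := forall k, (f k < f (S k))%nat.

Lemma sincr_ge f : sincr f -> forall k, (k <= f k)%nat.
Proof. intros H k; induction k. lia. specialize (H k). lia. Qed.

Lemma sincr_comp f g : sincr f -> sincr g -> sincr (fun k => f (g k)).
Proof. intros Hf Hg k. assert (forall a b, (a < b)%nat -> (f a < f b)%nat).
 { intros a b Hab. induction Hab. apply Hf. specialize (Hf m). lia. } apply H, Hg. Qed.

Lemma cv_sub v l f : Un_cv v l -> sincr f -> Un_cv (fun k => v (f k)) l.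
Proof. intros H Hf eps He. destruct (H eps He) as [N HN]. exists N. intros. apply HN.
 pose proof (sincr_ge f Hf n). lia. Qed.

Lemma BW1 (u : nat -> R) : (forall k, 0 <= u k <= 1) -> exists f l, sincr f /\ Un_cv (fun k => u (f k)) l.
Proof. intros Hu. destruct (Bolzano_Weierstrass u (fun c => 0 <= c <= 1) (compact_P3 0 1) Hu) as [l Hl].
 assert (Hsel : forall N k : nat, exists p, (N <= p)%nat /\ Rabs (u p - l) < / INR (S k)).
 { intros N k. assert (Hp : 0 < / INR (S k)) by (apply Rinv_0_lt_compat, lt_0_INR; lia).
   apply (Hl (fun y => Rabs (y - l) < / INR (S k)) N). exists (mkposreal _ Hp). intros y Hy. exact Hy. }
 set (sel := fun N k => proj1_sig (constructive_indefinite_description _ (Hsel N k))).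
 assert (Hs : forall N k, (N <= sel N k)%nat /\ Rabs (u (sel N k) - l) < / INR (S k)).
 { intros. unfold sel. destruct (constructive_indefinite_description _ _); auto. }
 set (f := fix f k := match k with O => sel O O | S k' => sel (S (f k')) (S k') end).
 exists f, l. split.
 - intros k. simpl. destruct (Hs (S (f k)) (S k)). lia.
 - intros eps He. destruct (archimed (/ eps)) as [Ha _].
   assert (0 < / eps) by (apply Rinv_0_lt_compat; auto).
   destruct (INR_unbounded (IZR (up (/ eps)))) as [N HN]. exists N. intros k Hk.
   assert (Hf : Rabs (u (f k) - l) < / INR (S k)). { destruct k; simpl; [apply Hs|apply Hs]. }
   unfold R_dist. eapply Rlt_le_trans. apply Hf.
   assert (INR N <= INR (S k)) by (apply le_INR; lia).
   assert (/ eps < INR (S k)) by lra.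
   rewrite <- (Rinv_inv eps). left. apply Rinv_lt_contravar; auto. apply Rmult_lt_0_compat; lra.
Qed.

Lemma BWvec (x : nat -> nat -> R) : (forall k i, 0 <= x k i <= 1) -> forall d,
  exists f l, sincr f /\ forall i, (i < d)%nat -> Un_cv (fun k => x (f k) i) (l i).
Proof. intros Hx d. induction d.
 - exists (fun k => k), (fun _ => 0). split. intros k; lia. intros; lia.
 - destruct IHd as [f [l [Hf Hl]]].
   destruct (BW1 (fun k => x (f k) d)) as [g [ld [Hg Hgl]]]. intros; apply Hx.
   exists (fun k => f (g k)), (fun i => if Nat.eqb i d then ld else l i). split.
   apply sincr_comp; auto.
   intros i Hi. destruct (Nat.eqb_spec i d). subst. auto.
   apply (cv_sub (fun k => x (f k) i)); auto. apply Hl. lia.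
Qed.

Lemma cv_sumR d (v : nat -> nat -> R) (l : nat -> R) :
  (forall j, (j < d)%nat -> Un_cv (fun k => v k j) (l j)) -> Un_cv (fun k => sumR d (v k)) (sumR d l).
Proof. induction d; intros H. simpl. intros eps He; exists 0%nat; intros; unfold R_dist; rewrite Rminus_diag, Rabs_R0; auto.
 simpl. apply CV_plus. apply IHd; intros; apply H; lia. apply H; lia. Qed.

Lemma telescope M (g : nat -> R) : sumR M (fun m => g m - g (S m)) = g 0%nat - g M.
Proof. induction M; simpl. lra. rewrite IHM. lra. Qed.

Lemma rootn_pow_inv m x : (1 <= m)%nat -> 0 < x -> rootn m x ^ m = x.
Proof. intros. rewrite rootn_pos_eq by auto. rewrite <- Rpower_pow by apply Rpower_pos.
 rewrite Rpower_mult. rewrite Rinv_l. apply Rpower_1; auto. apply not_0_INR; lia. Qed.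

Lemma rootn_lt_of m x t : (1 <= m)%nat -> 0 < t -> 0 <= x -> x < t ^ m -> rootn m x < t.
Proof. intros. destruct H1. destruct (Rlt_le_dec (rootn m x) t); auto.
 assert (t ^ m <= rootn m x ^ m) by (apply pow_incr; lra). rewrite rootn_pow_inv in H3; auto. lra.
 subst. unfold rootn. destruct (Rle_dec 0 0); lra. Qed.

Lemma bernoulli a M : 0 <= a <= 1 -> 1 - INR M * a <= (1 - a) ^ M.
Proof. intros. induction M. simpl. lra. rewrite S_INR. simpl.
 assert (0 <= (1 - a) ^ M) by (apply pow_le; lra).
 assert ((1 - a) * (1 - INR M * a) <= (1 - a) * (1 - a) ^ M) by (apply Rmult_le_compat_l; lra).
 pose proof (pos_INR M). nra. Qed.

Lemma sumR_lb_tail d f c : 0 <= c -> (forall m, (m < d)%nat -> 0 <= f m) ->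
  (forall m, (1 <= m)%nat -> (m < d)%nat -> c <= f m) -> INR (d - 1) * c <= sumR d f.
Proof. intros Hc. induction d; intros H0 H1. simpl. lra.
 simpl sumR. destruct d. simpl. rewrite Rmult_0_l, Rplus_0_l. apply H0; lia.
 replace (S (S d) - 1)%nat with (S (S d - 1)) by lia. rewrite S_INR.
 assert (INR (S d - 1) * c <= sumR (S d) f) by (apply IHd; intros; [apply H0|apply H1]; lia).
 assert (c <= f (S d)) by (apply H1; lia). lra. Qed.

Lemma cv_inv (v : nat -> R) a : (forall k, Rabs (v k - a) <= / INR (S k)) -> Un_cv v a.
Proof. intros H eps He. destruct (archimed (/ eps)) as [Ha _].
 assert (0 < / eps) by (apply Rinv_0_lt_compat; auto).
 destruct (INR_unbounded (IZR (up (/ eps)))) as [N HN]. exists N. intros k Hk.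
 unfold R_dist. eapply Rle_lt_trans. apply H.
 assert (INR N <= INR (S k)) by (apply le_INR; lia).
 assert (/ eps < INR (S k)) by lra.
 rewrite <- (Rinv_inv eps). apply Rinv_lt_contravar; auto. apply Rmult_lt_0_compat; lra. Qed.

Lemma pow_anti q a b : 0 <= q <= 1 -> (a <= b)%nat -> q ^ b <= q ^ a.
Proof. intros Hq H. induction H. lra. simpl. assert (0 <= q ^ m) by (apply pow_le; lra). nra. Qed.

Section PF.
Variable n : nat.
Variable A : nat -> nat -> R.
Hypothesis Anonneg : forall i j, (i < n)%nat -> (j < n)%nat -> 0 <= A i j.
Hypothesis Hn : (1 <= n)%nat.

Definition sigma t M := sumR M (fun m => bm n A m / t ^ (S m)).

Lemma sigma_term_nonneg t m : 0 < t -> 0 <= bm n A m / t ^ (S m).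
Proof. intros. unfold Rdiv. apply Rmult_le_pos. apply bm_nonneg; auto. left; apply Rinv_0_lt_compat, pow_lt; auto. Qed.

Lemma sigma_mono t M M' : 0 < t -> (M <= M')%nat -> sigma t M <= sigma t M'.
Proof. intros Ht H. induction H. lra. unfold sigma in *. cbn [sumR]. pose proof (sigma_term_nonneg t m Ht). lra. Qed.

Lemma stepA K d : 0 < K -> 0 < d -> exists t M, rr n A < t <= rr n A + d /\ K <= sigma t M.
Proof. intros HK Hd. pose proof (rr_nonneg n A) as Hr0.
 assert (Hn0 : 0 < INR n) by (apply lt_0_INR; lia).
 destruct Hr0 as [Hr|Hr].
 2:{ rewrite <- Hr. exists (Rmin d (INR n / K)), 1%nat.
   assert (0 < INR n / K) by (apply Rdiv_lt_0_compat; auto).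
   assert (0 < Rmin d (INR n / K)) by (apply Rmin_glb_lt; auto). split. split; auto. pose proof (Rmin_l d (INR n / K)); lra.
   unfold sigma. simpl. rewrite bm_0. rewrite Rmult_1_r, Rplus_0_l.
   pose proof (Rmin_r d (INR n / K)). set (t := Rmin d (INR n / K)) in *.
   apply (Rmult_le_reg_r t); auto. unfold Rdiv. rewrite Rmult_assoc, Rinv_l by lra.
   apply (Rmult_le_reg_r (/ K)). apply Rinv_0_lt_compat; auto. rewrite Rmult_comm, <- Rmult_assoc, Rinv_l by lra. lra. }
 set (r := rr n A) in *.
 assert (HM : exists M, 2 * K <= sigma r M).
 { apply NNPP; intro Hc.
   destruct (INR_unbounded (2 * K * r)) as [N HN].
   set (M := S (S N)).
   destruct (classic (exists m, (1 <= m)%nat /\ (m < M)%nat /\ bm n A m / r ^ (S m) < / r)) as [[m [Hm1 [HmM Hlt]]]|Hno].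
   - assert (bm n A m < r ^ m). { simpl in Hlt. unfold Rdiv in Hlt.
       assert (0 < r ^ m) by (apply pow_lt; auto). rewrite Rinv_mult in Hlt.
       apply (Rmult_lt_compat_r (r * r ^ m)) in Hlt; [|nra].
       replace (bm n A m * (/ r * / r ^ m) * (r * r ^ m)) with (bm n A m) in Hlt by (field; lra).
       replace (/ r * (r * r ^ m)) with (r ^ m) in Hlt by (field; lra). auto. }
     assert (rootn m (bm n A m) < r) by (apply rootn_lt_of; auto; apply bm_nonneg; auto).
     pose proof (rr_lb n A m Hm1). unfold r in *. lra.
   - assert (INR (M - 1) * / r <= sigma r M). { apply sumR_lb_tail. left; apply Rinv_0_lt_compat; auto.
       intros; apply sigma_term_nonneg; auto. intros. destruct (Rlt_le_dec (bm n A m / r ^ S m) (/ r)); auto.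
       exfalso; apply Hno; exists m; auto. }
     apply Hc. exists M. eapply Rle_trans; [|apply H].
     replace (M - 1)%nat with (S N) by (unfold M; lia). rewrite S_INR.
     apply (Rmult_le_reg_r r); auto. replace ((INR N + 1) * / r * r) with (INR N + 1) by (field; lra). lra. }
 destruct HM as [M HM].
 set (d' := Rmin d (r / (2 * (INR M + 1)))).
 assert (HMp : 0 < INR M + 1) by (pose proof (pos_INR M); lra).
 assert (Hd'0 : 0 < d') by (apply Rmin_glb_lt; auto; apply Rdiv_lt_0_compat; lra).
 assert (Hd'1 : d' <= d) by apply Rmin_l. assert (Hd'2 : d' <= r / (2 * (INR M + 1))) by apply Rmin_r.
 exists (r + d'), M. split. lra.
 set (t := r + d').
 set (q := r / t).
 assert (Hq0 : 0 < q) by (apply Rdiv_lt_0_compat; unfold t; lra).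
 assert (Hq1 : q <= 1) by (unfold q, t; apply (Rmult_le_reg_r (r + d')); [lra|]; unfold Rdiv; rewrite Rmult_assoc, Rinv_l; lra).
 assert (HqM : 1 / 2 <= q ^ M).
 { replace q with (1 - d' / t) by (unfold q, t; field; lra).
   eapply Rle_trans; [|apply bernoulli].
   assert (INR M * (d' / t) <= 1 / 2). { unfold t. apply Rle_trans with (INR M * (d' / r)).
     apply Rmult_le_compat_l. apply pos_INR. unfold Rdiv. apply Rmult_le_compat_l. lra. apply Rinv_le_contravar; lra.
     apply Rle_trans with (INR M * (1 / (2 * (INR M + 1)))).
     apply Rmult_le_compat_l. apply pos_INR. apply (Rmult_le_reg_r r); auto. unfold Rdiv. rewrite Rmult_assoc, Rinv_l by lra.
     unfold Rdiv in Hd'2. lra. apply (Rmult_le_reg_r (2 * (INR M + 1))). lra. unfold Rdiv. rewrite Rmult_assoc, Rmult_assoc, Rinv_l by lra. lra. }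
   lra. split. unfold Rdiv; apply Rmult_le_pos; [lra| left; apply Rinv_0_lt_compat; unfold t; lra]. unfold t. apply (Rmult_le_reg_r (r + d')). lra. unfold Rdiv. rewrite Rmult_assoc, Rinv_l; lra. }
 apply Rle_trans with (1 / 2 * sigma r M). lra.
 unfold sigma. rewrite <- sumR_scal. apply sumR_le. intros m Hm.
 replace (bm n A m / t ^ S m) with (bm n A m / r ^ S m * q ^ S m).
 2:{ assert (Hqt : q ^ S m * t ^ S m = r ^ S m). { rewrite <- Rpow_mult_distr. f_equal. unfold q, t; field; lra. }
   assert (0 < t ^ S m) by (apply pow_lt; unfold t; lra). assert (0 < r ^ S m) by (apply pow_lt; lra).
   rewrite <- Hqt. field. repeat split; try (apply pow_nonzero); apply Rgt_not_eq; unfold t in *; lra. }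
 assert (q ^ M <= q ^ S m) by (apply pow_anti; auto; lra).
 pose proof (sigma_term_nonneg r m Hr). nra.
Qed.

Lemma blowup K d : 0 < K -> 0 < d -> exists t M, rr n A < t <= rr n A + d /\ K <= sigma t M /\ bm n A M <= t ^ M.
Proof. intros HK Hd. destruct (stepA K d HK Hd) as [t [M1 [Ht HS]]].
 assert (Ht0 : 0 < t) by (pose proof (rr_nonneg n A); lra).
 destruct (rr_glb n A t ltac:(lra)) as [k [Hk Hlt]].
 assert (Hbk : bm n A k < t ^ k) by (apply rootn_lt_inv; auto; apply bm_nonneg; auto).
 exists t, (S M1 * k)%nat. split; auto. split.
 eapply Rle_trans. apply HS. apply sigma_mono; auto. nia.
 eapply Rle_trans. apply bm_pow; auto. rewrite Nat.mul_comm, pow_mult. apply pow_incr. split. apply bm_nonneg; auto. lra.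
Qed.

Definition Svec t M i := sumR M (fun m => row n A m i / t ^ (S m)).

Lemma Svec_sum t M : sumR n (Svec t M) = sigma t M.
Proof. unfold Svec, sigma. rewrite sumR_swap. apply sumR_ext; intros. unfold Rdiv. rewrite sumR_scal_r. auto. Qed.

Lemma Svec_nonneg t M i : 0 < t -> (i < n)%nat -> 0 <= Svec t M i.
Proof. intros. apply sumR_nonneg; intros. unfold Rdiv. apply Rmult_le_pos. apply row_nonneg; auto.
 left; apply Rinv_0_lt_compat, pow_lt; auto. Qed.

Lemma row_0 i : (i < n)%nat -> row n A 0 i = 1.
Proof. intros. unfold row. simpl. rewrite (sumR_ext _ _ (fun j => delta i j * 1)). apply (sumR_delta_l n (fun _ => 1)); auto.
 intros; lra. Qed.

Lemma Svec_resid t M i : 0 < t -> (i < n)%nat ->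
  t * Svec t M i - sumR n (fun j => A i j * Svec t M j) = 1 - row n A M i / t ^ M.
Proof. intros Ht Hi. unfold Svec.
 rewrite (sumR_ext _ (fun j => A i j * _) (fun j => sumR M (fun m => A i j * row n A m j / t ^ S m))).
 2:{ intros. rewrite <- sumR_scal. apply sumR_ext; intros. unfold Rdiv; ring. }
 rewrite sumR_swap. rewrite <- sumR_scal. rewrite <- sumR_minus.
 rewrite (sumR_ext _ _ (fun m => row n A m i / t ^ m - row n A (S m) i / t ^ (S m))).
 rewrite telescope. rewrite row_0 by auto. simpl. field. apply Rgt_not_eq; apply pow_lt; auto.
 intros m Hm. rewrite row_S by auto. unfold Rdiv. rewrite <- sumR_scal_r. simpl.
 assert (0 < t ^ m) by (apply pow_lt; auto). field. split; apply Rgt_not_eq; auto.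
Qed.

Theorem PF_vec : exists z : nat -> R, sumR n z = 1 /\
  forall i, (i < n)%nat -> sumR n (fun j => A i j * z j) = rr n A * z i.
Proof.
 assert (H : forall k : nat, exists tM : R * nat, rr n A < fst tM <= rr n A + / INR (S k) /\
     INR (S k) <= sigma (fst tM) (snd tM) /\ bm n A (snd tM) <= fst tM ^ snd tM).
 { intros k. assert (0 < INR (S k)) by (apply lt_0_INR; lia).
   destruct (blowup (INR (S k)) (/ INR (S k))) as [t [M HtM]]; auto. apply Rinv_0_lt_compat; auto.
   exists (t, M); simpl; auto. }
 set (tM := fun k => proj1_sig (constructive_indefinite_description _ (H k))).
 assert (HtM : forall k, rr n A < fst (tM k) <= rr n A + / INR (S k) /\
     INR (S k) <= sigma (fst (tM k)) (snd (tM k)) /\ bm n A (snd (tM k)) <= fst (tM k) ^ snd (tM k)).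
 { intros k. unfold tM. destruct (constructive_indefinite_description _ _). auto. }
 clearbody tM. clear H.
 pose proof (rr_nonneg n A) as Hr0.
 set (tk := fun k => fst (tM k)). set (Mk := fun k => snd (tM k)).
 set (x := fun k i => if Nat.ltb i n then Svec (tk k) (Mk k) i / sigma (tk k) (Mk k) else 0).
 assert (Htk : forall k, 0 < tk k) by (intros; unfold tk; destruct (HtM k) as [[? ?] _]; lra).
 assert (Hsig : forall k, INR (S k) <= sigma (tk k) (Mk k)) by (intros; apply HtM).
 assert (Hsig0 : forall k, 0 < sigma (tk k) (Mk k)) by (intros; eapply Rlt_le_trans; [|apply Hsig]; apply lt_0_INR; lia).
 assert (Hx : forall k i, 0 <= x k i <= 1).
 { intros. unfold x. destruct (Nat.ltb_spec i n). 2: lra.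
   assert (0 <= Svec (tk k) (Mk k) i) by (apply Svec_nonneg; auto).
   assert (Svec (tk k) (Mk k) i <= sigma (tk k) (Mk k)). { rewrite <- Svec_sum. apply (sumR_term n (Svec (tk k) (Mk k))); auto.
     intros; apply Svec_nonneg; auto. }
   specialize (Hsig0 k). split. unfold Rdiv; apply Rmult_le_pos; auto; left; apply Rinv_0_lt_compat; auto.
   apply (Rmult_le_reg_r (sigma (tk k) (Mk k))); auto. unfold Rdiv. rewrite Rmult_assoc, Rinv_l; lra. }
 assert (Hxs : forall k, sumR n (x k) = 1).
 { intros. rewrite (sumR_ext _ _ (fun i => Svec (tk k) (Mk k) i / sigma (tk k) (Mk k))).
   unfold Rdiv. rewrite sumR_scal_r. rewrite Svec_sum. apply Rinv_r. apply Rgt_not_eq; auto.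
   apply Hsig0. intros j Hj. unfold x. destruct (Nat.ltb_spec j n); [auto|lia]. }
 assert (Hres : forall k i, (i < n)%nat -> Rabs (tk k * x k i - sumR n (fun j => A i j * x k j) - 0) <= / INR (S k)).
 { intros k i Hi.
   rewrite (sumR_ext _ (fun j => A i j * x k j) (fun j => A i j * Svec (tk k) (Mk k) j * / sigma (tk k) (Mk k))).
   2:{ intros j Hj. unfold x. destruct (Nat.ltb_spec j n); [unfold Rdiv; ring|lia]. }
   rewrite sumR_scal_r. unfold x. destruct (Nat.ltb_spec i n); [|lia].
   replace (tk k * (Svec (tk k) (Mk k) i / sigma (tk k) (Mk k)) - sumR n (fun j => A i j * Svec (tk k) (Mk k) j) * / sigma (tk k) (Mk k) - 0)
     with ((tk k * Svec (tk k) (Mk k) i - sumR n (fun j => A i j * Svec (tk k) (Mk k) j)) / sigma (tk k) (Mk k)) by (unfold Rdiv; ring).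
   rewrite Svec_resid by auto.
   assert (0 <= row n A (Mk k) i) by (apply row_nonneg; auto).
   assert (row n A (Mk k) i <= tk k ^ Mk k). { eapply Rle_trans. apply row_le_bm; auto. apply HtM. }
   assert (0 < tk k ^ Mk k) by (apply pow_lt; auto).
   assert (0 <= row n A (Mk k) i / tk k ^ Mk k <= 1). { split. unfold Rdiv; apply Rmult_le_pos; auto; left; apply Rinv_0_lt_compat; auto.
     apply (Rmult_le_reg_r (tk k ^ Mk k)); auto. unfold Rdiv. rewrite Rmult_assoc, Rinv_l; lra. }
   specialize (Hsig k). specialize (Hsig0 k). assert (0 < INR (S k)) by (apply lt_0_INR; lia).
   rewrite Rabs_right. apply Rle_trans with (1 / sigma (tk k) (Mk k)).
   unfold Rdiv. apply Rmult_le_compat_r. left; apply Rinv_0_lt_compat; auto. lra.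
   unfold Rdiv. rewrite Rmult_1_l. apply Rinv_le_contravar; auto.
   apply Rle_ge. unfold Rdiv. apply Rmult_le_pos. lra. left; apply Rinv_0_lt_compat; auto. }
 destruct (BWvec x Hx n) as [f [l [Hf Hl]]].
 exists l. split.
 - apply (UL_sequence (fun k => sumR n (x (f k)))). apply cv_sumR. intros; apply Hl; auto.
   rewrite (functional_extensionality (fun k => sumR n (x (f k))) (fun _ => 1)) by (intros; apply Hxs).
   intros eps He; exists 0%nat; intros; unfold R_dist; rewrite Rminus_diag, Rabs_R0; auto.
 - intros i Hi.
   assert (Htc : Un_cv (fun k => tk (f k)) (rr n A)). { apply cv_inv. intros k.
     destruct (HtM (f k)) as [[? ?] _]. fold (tk (f k)) in H, H0. rewrite Rabs_right by lra.
     apply Rle_trans with (/ INR (S (f k))). lra. apply Rinv_le_contravar. apply lt_0_INR; lia. apply le_INR.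
     pose proof (sincr_ge f Hf k). lia. }
   assert (H1 : Un_cv (fun k => tk (f k) * x (f k) i - sumR n (fun j => A i j * x (f k) j)) (rr n A * l i - sumR n (fun j => A i j * l j))).
   { apply CV_minus. apply CV_mult; auto. apply cv_sumR. intros. apply CV_mult. intros eps He; exists 0%nat; intros; unfold R_dist; rewrite Rminus_diag, Rabs_R0; auto. apply Hl; auto. }
   assert (H2 : Un_cv (fun k => tk (f k) * x (f k) i - sumR n (fun j => A i j * x (f k) j)) 0).
   { apply cv_inv. intros k. eapply Rle_trans. apply Hres; auto. apply Rinv_le_contravar. apply lt_0_INR; lia. apply le_INR.
     pose proof (sincr_ge f Hf k). lia. }
   pose proof (UL_sequence _ _ _ H1 H2). lra.
Qed.
End PF.

Definition smul (c : nat) (g : vecZ) : vecZ := fun i => (Z.of_nat c * g i)%Z.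
Definition zerov : vecZ := fun _ => 0%Z.

Lemma fold_add (l : list vecZ) a i : fold_right (fun s acc => (s i + acc)%Z) a l = (fold_right (fun s acc => (s i + acc)%Z) 0%Z l + a)%Z.
Proof. induction l; simpl; lia. Qed.

Section Words.
Variable SG : list vecZ.

Lemma is_word_nil : is_word SG 0 zerov.
Proof. exists nil. simpl. repeat split; auto. intros s []. Qed.

Lemma is_word_app k1 k2 g1 g2 : is_word SG k1 g1 -> is_word SG k2 g2 -> is_word SG (k1 + k2) (vadd g1 g2).
Proof. intros [l1 [H1 [H1' H1'']]] [l2 [H2 [H2' H2'']]]. exists (l1 ++ l2). split. rewrite length_app; lia.
 split. intros s Hs. apply in_app_or in Hs. destruct Hs; auto.
 intros i. unfold vadd. rewrite H1'', H2''. rewrite fold_right_app. rewrite (fold_add l1 (fold_right _ 0%Z l2) i). reflexivity. Qed.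

Lemma is_word_smul c k g : is_word SG k g -> is_word SG (c * k) (smul c g).
Proof. intros H. induction c. simpl. replace (smul 0 g) with zerov. apply is_word_nil.
 apply functional_extensionality; intros; unfold smul, zerov; simpl; lia.
 replace (S c * k)%nat with (k + c * k)%nat by lia.
 replace (smul (S c) g) with (vadd g (smul c g)). apply is_word_app; auto.
 apply functional_extensionality; intros; unfold smul, vadd. rewrite Nat2Z.inj_succ. lia. Qed.

Lemma is_word_opp n k g : sym_gen_set n SG -> is_word SG k g -> is_word SG k (vopp g).
Proof. intros [_ [Hsym _]] [l [Hl [HlS Hg]]].
 assert (exists l', length l' = length l /\ (forall s, In s l' -> In s SG) /\
    forall i, fold_right (fun s acc => (s i + acc)%Z) 0%Z l' = (- fold_right (fun s acc => (s i + acc)%Z) 0%Z l)%Z).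
 { clear Hl Hg. induction l. exists nil. simpl. split; [auto|split; [intros s []|intros; lia]].
   destruct IHl as [l' [H1 [H2 H3]]]. intros; apply HlS; right; auto.
   destruct (Hsym a) as [a' [Ha' Ha'']]. apply HlS; left; auto.
   exists (a' :: l'). simpl. split. lia. split. intros s [<-|Hs]; auto. intros i. rewrite H3, Ha''. lia. }
 destruct H as [l' [H1 [H2 H3]]]. exists l'. split. lia. split; auto. intros i. unfold vopp. rewrite H3, Hg. auto. Qed.

Lemma word_length_exists g : (exists k, is_word SG k g) -> exists k, word_length SG g k.
Proof. intros H.
 destruct (Wf_nat.dec_inh_nat_subset_has_unique_least_element (fun k => is_word SG k g)) as [k [[Hk Hmin] _]].
 intros; apply classic. auto. exists k. split; auto. Qed.
End Words.

Fixpoint sumN (d : nat) (f : nat -> nat) : nat := match d with O => 0 | S k => sumN k f + f k end.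

Lemma sumN_INR d f : INR (sumN d f) = sumR d (fun i => INR (f i)).
Proof. induction d; simpl. auto. rewrite plus_INR, IHd. auto. Qed.

Definition ev (i : nat) : vecZ := fun j => if Nat.eqb j i then 1%Z else 0%Z.
Definition trunc (d : nat) (g : vecZ) : vecZ := fun j => if Nat.ltb j d then g j else 0%Z.

Section Gen.
Variable n : nat.
Variable SG : list vecZ.
Hypothesis HS : sym_gen_set n SG.

Lemma ev_word_bound : forall d, (d <= n)%nat -> exists C, forall i, (i < d)%nat -> exists l, (l <= C)%nat /\ is_word SG l (ev i).
Proof. induction d; intros. exists 0%nat. intros; lia.
 destruct IHd as [C HC]. lia.
 destruct HS as [_ [_ Hgen]]. destruct (Hgen (ev d)) as [l Hl].
 intros i Hi. unfold ev. destruct (Nat.eqb_spec i d); [lia|auto].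
 exists (Nat.max C l). intros i Hi. destruct (Nat.eq_dec i d). subst. exists l. split; auto. lia.
 destruct (HC i ltac:(lia)) as [l' [H1 H2]]. exists l'. split; auto. lia. Qed.

Lemma gen_bound : exists C, forall g, inZn n g -> exists K, is_word SG K g /\ (K <= C * sumN n (fun i => Z.abs_nat (g i)))%nat.
Proof. destruct (ev_word_bound n (le_n n)) as [C HC]. exists C. intros g Hg.
 assert (forall d, (d <= n)%nat -> exists K, is_word SG K (trunc d g) /\ (K <= C * sumN d (fun i => Z.abs_nat (g i)))%nat).
 { induction d; intros Hd. exists 0%nat. split; [|lia]. replace (trunc 0 g) with zerov. apply is_word_nil.
   apply functional_extensionality; intros; unfold trunc, zerov; destruct (Nat.ltb_spec x 0); lia.
   destruct IHd as [K [HK1 HK2]]. lia.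
   destruct (HC d ltac:(lia)) as [l [Hl1 Hl2]].
   set (c := Z.abs_nat (g d)).
   assert (Hw : is_word SG (c * l) (fun j => if Nat.eqb j d then g d else 0%Z)).
   { destruct (Z_le_gt_dec 0 (g d)).
     - replace (fun j => if Nat.eqb j d then g d else 0%Z) with (smul c (ev d)). apply is_word_smul; auto.
       apply functional_extensionality; intros; unfold smul, ev, c. destruct (Nat.eqb_spec x d); lia.
     - replace (fun j => if Nat.eqb j d then g d else 0%Z) with (vopp (smul c (ev d))). apply (is_word_opp SG n); auto. apply is_word_smul; auto.
       apply functional_extensionality; intros; unfold vopp, smul, ev, c. destruct (Nat.eqb_spec x d); lia. }
   exists (K + c * l)%nat. split.
   replace (trunc (S d) g) with (vadd (trunc d g) (fun j => if Nat.eqb j d then g d else 0%Z)). apply is_word_app; auto.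
   apply functional_extensionality; intros; unfold vadd, trunc. destruct (Nat.ltb_spec x d), (Nat.eqb_spec x d), (Nat.ltb_spec x (S d)); subst; try lia; auto.
   simpl. fold c. nia. }
 destruct (H n (le_n n)) as [K [HK1 HK2]]. exists K. split; auto.
 replace g with (trunc n g). auto. apply functional_extensionality; intros; unfold trunc. destruct (Nat.ltb_spec x n); auto. rewrite Hg; auto. Qed.

Definition CW : R := 1 + fold_right (fun s acc => sumR n (fun i => Rabs (IZR (s i))) + acc) 0 SG.

Lemma CW_pos : 1 <= CW.
Proof. unfold CW. assert (forall l : list vecZ, 0 <= fold_right (fun s acc => sumR n (fun i => Rabs (IZR (s i))) + acc) 0 l).
 induction l; simpl. lra. pose proof (sumR_nonneg n (fun i => Rabs (IZR (a i))) (fun k _ => Rabs_pos _)). lra.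
 specialize (H SG). lra. Qed.

Lemma gen_coord_bound s i : In s SG -> (i < n)%nat -> Rabs (IZR (s i)) <= CW.
Proof. intros. unfold CW. assert (forall l : list vecZ, In s l -> Rabs (IZR (s i)) <= fold_right (fun s acc => sumR n (fun i => Rabs (IZR (s i))) + acc) 0 l).
 { induction l; simpl. tauto. assert (forall l : list vecZ, 0 <= fold_right (fun s acc => sumR n (fun i => Rabs (IZR (s i))) + acc) 0 l).
   induction l0; simpl. lra. pose proof (sumR_nonneg n (fun i => Rabs (IZR (a0 i))) (fun k _ => Rabs_pos _)). lra.
   intros [<-|Hl]. pose proof (sumR_term n (fun i => Rabs (IZR (a i))) i (fun k _ => Rabs_pos _) H0). specialize (H1 l). lra.
   pose proof (sumR_nonneg n (fun i => Rabs (IZR (a i))) (fun k _ => Rabs_pos _)). specialize (IHl Hl). lra. }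
 specialize (H1 SG H). lra. Qed.

Lemma word_coord_bound k g i : is_word SG k g -> (i < n)%nat -> Rabs (IZR (g i)) <= INR k * CW.
Proof. intros [l [Hl [HlS Hg]]] Hi. rewrite Hg. subst k. clear Hg. induction l. simpl. rewrite Rabs_R0. lra.
 simpl fold_right. rewrite plus_IZR. simpl length. rewrite S_INR.
 pose proof (gen_coord_bound a i (HlS a (or_introl eq_refl)) Hi).
 assert (Rabs (IZR (fold_right (fun s acc => (s i + acc)%Z) 0%Z l)) <= INR (length l) * CW) by (apply IHl; intros; apply HlS; right; auto).
 eapply Rle_trans. apply Rabs_triang. lra. Qed.
End Gen.

Lemma fact_div a q : (1 <= a <= q)%nat -> exists c, fact q = (c * a)%nat.
Proof. induction q; intros. lia. destruct (Nat.eq_dec a (S q)). subst. exists (fact q). simpl. lia.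
 destruct IHq as [c Hc]. lia. exists (S q * c)%nat. simpl. rewrite Hc. lia. Qed.

Lemma smul_inZn n c g : inZn n g -> inZn n (smul c g).
Proof. intros H i Hi. unfold smul. rewrite H; auto. lia. Qed.

Lemma smul_mul a b g : smul (a * b) g = smul a (smul b g).
Proof. apply functional_extensionality; intros; unfold smul. rewrite Nat2Z.inj_mul. lia. Qed.

Section Lat.
Variable n : nat.
Variable D : vecZ -> Prop.
Variable phi : vecZ -> vecZ.
Variable A : nat -> nat -> R.
Hypothesis Hve : virtual_endo n D phi.
Hypothesis Hlin : linear_extension n D phi A.

Lemma D_smul c h : D h -> D (smul c h).
Proof. destruct Hve as [[_ Hz Hadd _ _] _ _]. intros Hh. induction c.
 replace (smul 0 h) with (fun _ : nat => 0%Z). auto. apply functional_extensionality; intros; unfold smul; simpl; lia.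
 replace (smul (S c) h) with (vadd h (smul c h)). auto. apply functional_extensionality; intros; unfold smul, vadd. rewrite Nat2Z.inj_succ. lia. Qed.

Lemma iter_inZn m g : dom_iter n D phi m g -> inZn n (Nat.iter m phi g).
Proof. destruct m; simpl. auto. intros [_ H]. apply (ve_into _ _ _ Hve); auto. Qed.

Lemma iter_lin m g : dom_iter n D phi m g -> forall i, (i < n)%nat ->
  IZR (Nat.iter m phi g i) = sumR n (fun j => Apow n A m i j * IZR (g j)).
Proof. induction m; intros Hd i Hi. simpl. rewrite sumR_delta_l; auto.
 destruct Hd as [Hd HD]. simpl Nat.iter. rewrite Hlin by auto.
 rewrite (sumR_ext _ _ (fun k => A i k * sumR n (fun j => Apow n A m k j * IZR (g j)))) by (intros; rewrite IHm; auto).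
 simpl Apow. rewrite (sumR_ext _ (fun k => A i k * _) (fun k => sumR n (fun j => A i k * Apow n A m k j * IZR (g j)))).
 rewrite sumR_swap. apply sumR_ext; intros. rewrite sumR_scal_r. auto.
 intros. rewrite <- sumR_scal. apply sumR_ext; intros; ring. Qed.

Lemma lattice : exists p, (1 <= p)%nat /\ forall g, inZn n g -> D (smul p g).
Proof. destruct Hve as [[Hsub Hz Hadd Hopp [reps Hreps]] _ _].
 exists (fact (length reps)). split. apply lt_O_fact. intros g Hg.
 set (q := length reps).
 assert (Hr : forall j : nat, exists r, In r reps /\ D (vadd (smul j g) (vopp r))) by (intros; apply Hreps; apply smul_inZn; auto).
 set (rf := fun j => proj1_sig (constructive_indefinite_description _ (Hr j))).
 assert (Hrf : forall j, In (rf j) reps /\ D (vadd (smul j g) (vopp (rf j)))).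
 { intros. unfold rf. destruct (constructive_indefinite_description _ _); auto. }
 set (L := map rf (seq 0 (S q))).
 assert (HnD : ~ NoDup L). { intros HN. assert (length L <= length reps)%nat. apply NoDup_incl_length; auto.
   intros x Hx. unfold L in Hx. apply in_map_iff in Hx. destruct Hx as [j [<- _]]. apply Hrf.
   unfold L in H. rewrite length_map, length_seq in H. fold q in H. lia. }
 rewrite NoDup_nth with (d := zerov) in HnD.
 assert (exists i j, (i < j)%nat /\ (j <= q)%nat /\ rf i = rf j) as [i [j [Hij [Hjq Heq]]]].
 { apply NNPP; intro Hc. apply HnD. intros i j Hi Hj Hnth. unfold L in *. rewrite length_map, length_seq in Hi, Hj.
   rewrite !nth_indep with (d := zerov) (d' := rf 0%nat) in Hnth by (rewrite length_map, length_seq; auto).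
   rewrite !map_nth, !seq_nth in Hnth by auto. simpl in Hnth.
   destruct (Nat.lt_trichotomy i j) as [H|[H|H]]; auto; exfalso; apply Hc.
   exists i, j; repeat split; auto; lia. exists j, i; repeat split; auto; lia. }
 assert (Hd : D (smul (j - i) g)).
 { destruct (Hrf i) as [_ Hi]. destruct (Hrf j) as [_ Hj].
   replace (smul (j - i) g) with (vadd (vadd (smul j g) (vopp (rf j))) (vopp (vadd (smul i g) (vopp (rf i))))).
   apply Hadd; auto. apply functional_extensionality; intros x. unfold vadd, vopp, smul. rewrite Heq.
   rewrite Nat2Z.inj_sub by lia. lia. }
 destruct (fact_div (j - i) q) as [c Hc]. lia. rewrite Hc. rewrite smul_mul. apply D_smul; auto. Qed.

Lemma dom_lattice p : (forall g, inZn n g -> D (smul p g)) -> forall m g, inZn n g -> dom_iter n D phi m (smul (p ^ m) g).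
Proof. intros Hp m. induction m; intros g Hg.
 simpl. apply smul_inZn; auto.
 assert (E : smul (p ^ S m) g = smul (p ^ m) (smul p g)) by (rewrite <- smul_mul; f_equal; simpl; lia).
 change (dom_iter n D phi (S m) (smul (p ^ S m) g)) with (dom_iter n D phi m (smul (p ^ S m) g) /\ D (Nat.iter m phi (smul (p ^ S m) g))). rewrite E. split. apply IHm. apply smul_inZn; auto.
 replace (Nat.iter m phi (smul (p ^ m) (smul p g))) with (smul p (Nat.iter m phi (smul (p ^ m) g))).
 apply Hp. apply iter_inZn. apply IHm; auto.
 apply functional_extensionality; intros i. destruct (Nat.lt_ge_cases i n).
 - apply eq_IZR. unfold smul at 1. rewrite mult_IZR. rewrite !iter_lin; auto. 2: apply IHm, smul_inZn; auto.
   rewrite <- sumR_scal. apply sumR_ext; intros. unfold smul. rewrite !mult_IZR. ring.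
 - unfold smul at 1. rewrite (iter_inZn m (smul (p ^ m) g)); auto. rewrite (iter_inZn m (smul (p ^ m) (smul p g))); auto. lia.
   apply IHm; apply smul_inZn; auto.
Qed.
End Lat.

Lemma abstract_limsup (RS : R -> R -> Prop) lo U :
  (forall R0 x, 1 <= R0 -> RS R0 x -> x <= U) ->
  (forall R0, exists x, RS R0 x /\ lo <= x) ->
  (forall R0 R1 x, R1 <= R0 -> RS R0 x -> RS R1 x) ->
  exists L, lo <= L <= U /\ forall eps, 0 < eps ->
    (exists R0, forall x, RS R0 x -> x <= L + eps) /\ (forall R0, exists x, RS R0 x /\ L - eps <= x).
Proof. intros HU HL HM.
 assert (HF : forall N : nat, { F | is_lub (RS (INR (S N))) F }).
 { intros N. apply completeness. exists U. intros x Hx. apply (HU (INR (S N))); auto. apply (le_INR 1); lia.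
   destruct (HL (INR (S N))) as [x [Hx _]]; eauto. }
 set (F := fun N => proj1_sig (HF N)).
 assert (HFs : forall N, is_lub (RS (INR (S N))) (F N)) by (intros; unfold F; destruct (HF N); auto).
 assert (HFb : forall N, lo <= F N <= U).
 { intros N. destruct (HFs N) as [H1 H2]. split. destruct (HL (INR (S N))) as [x [Hx Hlo]]. apply H1 in Hx. lra.
   apply H2. intros x Hx. apply (HU (INR (S N))); auto. apply (le_INR 1); lia. }
 set (E := fun y => exists N, y = - F N).
 destruct (completeness E) as [G [HG1 HG2]].
 exists (- lo). intros y [N ->]. specialize (HFb N). lra. exists (- F 0%nat). exists 0%nat. auto.
 exists (- G). split. split.
 - assert (G <= - lo). apply HG2. intros y [N ->]. specialize (HFb N). lra. lra.
 - assert (- F 0%nat <= G) by (apply HG1; exists 0%nat; auto). specialize (HFb 0%nat). lra.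
 - intros eps He. split.
   + destruct (classic (exists N, F N <= - G + eps)) as [[N HN]|Hno].
     * exists (INR (S N)). intros x Hx. destruct (HFs N) as [H1 _]. apply H1 in Hx. lra.
     * exfalso. assert (G <= - (- G + eps)). apply HG2. intros y [N ->]. destruct (Rle_lt_dec (F N) (- G + eps)).
       exfalso; apply Hno; exists N; auto. lra. lra.
   + intros R0. destruct (INR_unbounded R0) as [N HN].
     assert (HFN : - G <= F N) by (assert (- F N <= G) by (apply HG1; exists N; auto); lra).
     destruct (classic (exists x, RS (INR (S N)) x /\ F N - eps < x)) as [[x [Hx Hx2]]|Hno].
     * exists x. split. apply (HM (INR (S N))); auto. rewrite S_INR. lra. lra.
     * exfalso. destruct (HFs N) as [_ H2]. assert (F N <= F N - eps). apply H2. intros x Hx.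
       destruct (Rle_lt_dec x (F N - eps)); auto. exfalso; apply Hno; exists x; auto. lra.
Qed.

Lemma sumR_lt_const d f c : (1 <= d)%nat -> (forall k, (k < d)%nat -> f k < c) -> sumR d f < INR d * c.
Proof. induction d; intros. lia. simpl sumR. rewrite S_INR. destruct d. simpl. rewrite Rplus_0_l. specialize (H0 0%nat ltac:(lia)). lra.
 assert (sumR (S d) f < INR (S d) * c) by (apply IHd; [lia|intros; apply H0; lia]). specialize (H0 (S d) ltac:(lia)). lra. Qed.

Lemma INR_abs_nat z : INR (Z.abs_nat z) = Rabs (IZR z).
Proof. rewrite INR_IZR_INZ, Nat2Z.inj_abs_nat, abs_IZR. auto. Qed.

Section Main.
Variable n : nat.
Variable D : vecZ -> Prop.
Variable phi : vecZ -> vecZ.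
Variable A : nat -> nat -> R.
Variable SG : list vecZ.
Hypothesis Hn : (1 <= n)%nat.
Hypothesis Hve : virtual_endo n D phi.
Hypothesis Hlin : linear_extension n D phi A.
Hypothesis Anonneg : forall i j, (i < n)%nat -> (j < n)%nat -> 0 <= A i j.
Hypothesis HS : sym_gen_set n SG.

Definition RS m R0 x := exists g k kg, dom_iter n D phi m g /\ word_length SG g k /\
  word_length SG (Nat.iter m phi g) kg /\ R0 <= INR k /\ x = INR kg / INR k.

Definition GB (C2 : nat) : Prop := forall g, inZn n g -> exists K, is_word SG K g /\ (K <= C2 * sumN n (fun i => Z.abs_nat (g i)))%nat.

Lemma wl_bound (C2 : nat) (HC2 : GB C2)
  g k : inZn n g -> word_length SG g k -> INR k <= INR C2 * sumR n (fun i => Rabs (IZR (g i))).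
Proof. intros Hg [_ Hmin]. destruct (HC2 g Hg) as [K [HK1 HK2]]. apply Hmin in HK1.
 rewrite <- (sumR_ext n (fun i => INR (Z.abs_nat (g i)))) by (intros; apply INR_abs_nat).
 rewrite <- sumN_INR, <- mult_INR. apply le_INR. lia. Qed.

Lemma ratio_upper C2 (HC2 : GB C2) m R0 x : (1 <= m)%nat -> 1 <= R0 -> RS m R0 x -> x <= CW n SG * INR C2 * bm n A m.
Proof. intros Hm HR0 [g [k [kg [Hd [Hk [Hkg [HRk ->]]]]]]].
 assert (Hk0 : 0 < INR k) by lra.
 assert (Hh : inZn n (Nat.iter m phi g)) by (apply (iter_inZn n D phi Hve m); auto).
 pose proof (wl_bound C2 HC2 _ _ Hh Hkg) as Hb.
 assert (Hsum : sumR n (fun i => Rabs (IZR (Nat.iter m phi g i))) <= bm n A m * (INR k * CW n SG)).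
 { unfold bm. rewrite <- sumR_scal_r. apply sumR_le. intros i Hi. rewrite (iter_lin n D phi A Hlin m g Hd i Hi).
   eapply Rle_trans. apply sumR_abs. rewrite <- sumR_scal_r. apply sumR_le. intros j Hj.
   rewrite Rabs_mult. rewrite (Rabs_right (Apow n A m i j)) by (apply Rle_ge, Apow_nonneg; auto).
   apply Rmult_le_compat_l. apply Apow_nonneg; auto. apply (word_coord_bound n SG k g j). apply Hk. auto. }
 assert (0 <= INR C2) by apply pos_INR.
 apply (Rmult_le_reg_r (INR k)); auto. unfold Rdiv. rewrite Rmult_assoc, Rinv_l by lra.
 assert (INR C2 * sumR n (fun i => Rabs (IZR (Nat.iter m phi g i))) <= INR C2 * (bm n A m * (INR k * CW n SG))) by (apply Rmult_le_compat_l; auto).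
 nra. Qed.

Lemma big_entry m : exists i j, (i < n)%nat /\ (j < n)%nat /\ bm n A m <= INR n * INR n * Apow n A m i j.
Proof. apply NNPP; intro Hc.
 assert (Hn0 : 0 < INR n) by (apply lt_0_INR; lia).
 set (c := bm n A m / (INR n * INR n)).
 assert (H : forall i j, (i < n)%nat -> (j < n)%nat -> Apow n A m i j < c).
 { intros i j Hi Hj. destruct (Rlt_le_dec (Apow n A m i j) c); auto. exfalso; apply Hc. exists i, j. split; auto. split; auto.
   unfold c in r. apply (Rmult_le_compat_l (INR n * INR n)) in r. replace (INR n * INR n * (bm n A m / (INR n * INR n))) with (bm n A m) in r by (field; lra). auto. nra. }
 assert (bm n A m < INR n * (INR n * c)). { unfold bm. apply sumR_lt_const; auto. intros. apply sumR_lt_const; auto. }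
 unfold c in H0. replace (INR n * (INR n * (bm n A m / (INR n * INR n)))) with (bm n A m) in H0 by (field; lra). lra. Qed.

Lemma ev_inZn j : (j < n)%nat -> inZn n (ev j).
Proof. intros Hj i Hi. unfold ev. destruct (Nat.eqb_spec i j); auto. lia. Qed.

Lemma ratio_lower C2 (HC2 : GB C2) m R0 : (1 <= m)%nat -> exists x, RS m R0 x /\ bm n A m / (INR n * INR n * CW n SG * INR C2) <= x.
Proof. intros Hm.
 destruct (big_entry m) as [i0 [j0 [Hi0 [Hj0 Hbig]]]].
 destruct (lattice n D phi Hve) as [p [Hp1 Hp]].
 destruct (INR_unbounded (R0 * CW n SG)) as [t Ht].
 pose proof (CW_pos n SG) as HCW.
 set (Q := (p ^ m * S t)%nat).
 assert (HQ : INR (S t) <= INR Q). { apply le_INR. unfold Q. assert (1 <= p ^ m)%nat by (apply Nat.neq_0_lt_0, Nat.pow_nonzero; lia). nia. }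
 assert (HQ0 : 0 < INR (S t)) by (apply lt_0_INR; lia).
 set (g := smul (p ^ m) (smul (S t) (ev j0))).
 assert (Hg : forall j, IZR (g j) = INR Q * delta j j0).
 { intros j. unfold g, smul, ev, delta, Q. rewrite Nat.mul_comm, mult_INR, !INR_IZR_INZ. destruct (Nat.eqb_spec j j0); rewrite ?mult_IZR; simpl; ring. }
 assert (Hgz : inZn n g) by (apply smul_inZn, smul_inZn, ev_inZn; auto).
 assert (Hd : dom_iter n D phi m g) by (apply (dom_lattice n D phi A Hve Hlin p Hp); apply smul_inZn, ev_inZn; auto).
 assert (Hh : inZn n (Nat.iter m phi g)) by (apply (iter_inZn n D phi Hve m); auto).
 destruct HS as [_ [_ Hgen]].
 destruct (word_length_exists SG g (Hgen g Hgz)) as [k Hk].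
 destruct (word_length_exists SG _ (Hgen _ Hh)) as [kg Hkg].
 assert (Hk1 : Rabs (IZR (g j0)) <= INR k * CW n SG) by (apply (word_coord_bound n SG k g j0); [apply Hk|auto]).
 rewrite Hg in Hk1. unfold delta in Hk1. rewrite Nat.eqb_refl, Rmult_1_r, Rabs_right in Hk1 by (apply Rle_ge, pos_INR).
 assert (HkR : R0 < INR k). { apply (Rmult_lt_reg_r (CW n SG)). lra. rewrite S_INR in HQ. lra. }
 assert (Hk2 : INR k <= INR C2 * INR Q).
 { eapply Rle_trans. apply (wl_bound C2 HC2 g k); auto. apply Rmult_le_compat_l. apply pos_INR.
   rewrite (sumR_ext _ _ (fun j => INR Q * delta j j0)). rewrite (sumR_delta_r n (fun _ => INR Q) j0); auto. lra.
   intros j Hj. rewrite Hg. rewrite Rabs_right. auto. apply Rle_ge, Rmult_le_pos. apply pos_INR. unfold delta; destruct (Nat.eqb j j0); lra. }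
 assert (Hkg1 : Rabs (IZR (Nat.iter m phi g i0)) <= INR kg * CW n SG) by (apply (word_coord_bound n SG kg _ i0); [apply Hkg|auto]).
 rewrite (iter_lin n D phi A Hlin m g Hd i0 Hi0) in Hkg1.
 rewrite (sumR_ext _ _ (fun j => Apow n A m i0 j * INR Q * delta j j0)) in Hkg1 by (intros; rewrite Hg; ring).
 rewrite (sumR_delta_r n (fun j => Apow n A m i0 j * INR Q) j0) in Hkg1 by auto.
 assert (Ha0 : 0 <= Apow n A m i0 j0) by (apply Apow_nonneg; auto).
 rewrite Rabs_right in Hkg1 by (apply Rle_ge, Rmult_le_pos; auto; apply pos_INR).
 exists (INR kg / INR k). split. exists g, k, kg. repeat split; auto; try apply Hk; try apply Hkg; lra.
 assert (Hk0 : 0 < INR k) by (assert (0 < INR k * CW n SG) by lra; nra).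
 assert (HC20 : 0 < INR C2) by (assert (0 < INR Q) by lra; nra).
 assert (Hn0 : 0 < INR n) by (apply lt_0_INR; lia).
 set (a := Apow n A m i0 j0) in *. set (W := CW n SG) in *.
 assert (HQp : 0 < INR Q) by lra.
 assert (H1 : a / (W * INR C2) <= INR kg / INR k).
 { apply (Rmult_le_reg_r (W * INR C2 * INR k)). nra. 
   replace (a / (W * INR C2) * (W * INR C2 * INR k)) with (a * INR k) by (field; lra).
   replace (INR kg / INR k * (W * INR C2 * INR k)) with (INR kg * W * INR C2) by (field; lra).
   assert (a * INR k <= a * (INR C2 * INR Q)) by (apply Rmult_le_compat_l; auto).
   assert (a * INR Q * INR C2 <= INR kg * W * INR C2) by (apply Rmult_le_compat_r; lra). nra. }
 eapply Rle_trans; [|apply H1].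
 apply (Rmult_le_reg_r (INR n * INR n * W * INR C2)). repeat apply Rmult_lt_0_compat; lra.
 replace (bm n A m / (INR n * INR n * W * INR C2) * (INR n * INR n * W * INR C2)) with (bm n A m) by (field; repeat split; lra).
 replace (a / (W * INR C2) * (INR n * INR n * W * INR C2)) with (INR n * INR n * a) by (field; lra). lra.
Qed.
End Main.

Theorem mainTheorem11 (n : nat) (D : vecZ -> Prop) (phi : vecZ -> vecZ)
  (A : nat -> nat -> R) (S : list vecZ) :
  (1 <= n)%nat ->
  virtual_endo n D phi ->
  linear_extension n D phi A ->
  (forall i j, (i < n)%nat -> (j < n)%nat -> 0 <= A i j) ->
  sym_gen_set n S ->
  exists r, is_spectral_radius n A r /\ contraction_coefficient n S D phi r.
Proof.
 intros Hn Hve Hlin Anonneg HS.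
 exists (rr n A). split.
 - split.
   + destruct (PF_vec n A Anonneg Hn) as [z [Hz1 Hz2]].
     exists (rr n A, 0). split.
     * exists (fun j => (z j, 0)). split.
       { apply NNPP; intro Hc. assert (sumR n z = 0).
         { rewrite <- (sumR_zero n). apply sumR_ext. intros k Hk. destruct (Req_dec (z k) 0); auto.
           exfalso; apply Hc; exists k; split; auto. intro He; inversion He; auto. }
         lra. }
       intros i Hi. simpl. unfold Cmul; simpl. rewrite Hz2 by auto.
       rewrite (sumR_ext _ _ (fun _ => 0)) by (intros; ring). rewrite sumR_zero. f_equal; ring.
     * unfold Cmod; simpl. rewrite Rmult_0_l, Rplus_0_r. apply sqrt_square. apply rr_nonneg.
   + intros lam Hl. apply eig_bound; auto.
 - destruct (gen_bound n S HS) as [C2 HC2].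
   set (lo := fun m => bm n A m / (INR n * INR n * CW n S * INR C2)).
   set (up := fun m => CW n S * INR C2 * bm n A m).
   assert (HL : forall m, exists L, (1 <= m)%nat -> lo m <= L <= up m /\ inner_limsup n S D phi m L).
   { intros m. destruct (le_lt_dec 1 m) as [Hm|Hm]. 2:{ exists 0. intros; lia. }
     destruct (abstract_limsup (RS n D phi S m) (lo m) (up m)) as [L [HLb HLs]].
     intros R0 x HR0 Hx. eapply ratio_upper; eauto.
     intros R0. eapply ratio_lower; eauto.
     intros R0 R1 x HR [g [k [kg [H1 [H2 [H3 [H4 H5]]]]]]]. exists g, k, kg. split; [auto| split; [auto| split; [auto| split; [lra|auto]]]].
     exists L. intros _. split; auto. intros eps He. destruct (HLs eps He) as [Hup Hlow]. split.
     - destruct Hup as [R0 HR0]. exists R0. intros g k kg Hd Hk Hkg HRk. apply HR0. exists g, k, kg. split; [auto| split; [auto| split; [auto| split; [lra|auto]]]].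
     - intros R0. destruct (Hlow R0) as [x [[g [k [kg [H1 [H2 [H3 [H4 ->]]]]]]] Hx]]. exists g, k, kg. split; [auto| split; [auto| split; [auto| split; [auto|lra]]]]. }
   set (Lf := fun m => proj1_sig (constructive_indefinite_description _ (HL m))).
   assert (HLf : forall m, (1 <= m)%nat -> lo m <= Lf m <= up m /\ inner_limsup n S D phi m (Lf m)).
   { intros m Hm. unfold Lf. destruct (constructive_indefinite_description _ _). auto. }
   exists Lf. split. intros m Hm; apply HLf; auto.
   assert (HC2p : 0 < INR C2).
   { destruct C2. 2: apply lt_0_INR; lia. exfalso.
     assert (He0 : inZn n (ev 0)) by (intros i Hi; unfold ev; destruct (Nat.eqb_spec i 0); [lia|auto]).
     destruct (HC2 (ev 0) He0) as [K [[l [Hl [_ Hg]]] HK]].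
     assert (HK0 : K = 0%nat) by lia. rewrite HK0 in Hl. destruct l; [|simpl in Hl; lia]. specialize (Hg 0%nat). unfold ev in Hg. simpl in Hg. lia. }
   pose proof (CW_pos n S). assert (0 < INR n) by (apply lt_0_INR; lia).
   apply (rootn_limsup n A Anonneg Lf (/ (INR n * INR n * CW n S * INR C2)) (CW n S * INR C2)).
   apply Rinv_0_lt_compat. repeat apply Rmult_lt_0_compat; lra. apply Rmult_lt_0_compat; lra.
   intros m Hm. destruct (HLf m Hm) as [[H1 H2] _]. unfold lo, up in *. split. unfold Rdiv in H1. lra. lra.
Qed.
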